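(* Let $\kappa>0$, $u_0>0$, and consider the sessile liquid channel with parameter $u_0$ and contact angle $\gamma$ resting on $\Pi$, with volume $\mathcal V(\gamma)$. Let $a=r(\gamma)$ and $R=r(\pi/2)$. If $0<\gamma\le\pi/2$, then $$\mathcal V(\gamma)<\frac{a^2}{\sin^2\gamma}(\gamma-\sin\gamma\cos\gamma).$$ If $\pi/2\le\gamma\le\pi$, then $$\mathcal V(\gamma)<R^2(\gamma-\sin\gamma\cos\gamma).$$
   Context: For $u_0>0$, $(r(\psi),u(\psi))$, $\psi\in[0,\pi]$, is the solution of $\frac{dr}{d\psi}=\frac{\cos\psi}{\kappa u}$, $\frac{du}{d\psi}=\frac{\sin\psi}{\kappa u}$, $r(0)=0$, $u(0)=u_0$ (profile of a $\kappa$-cylindrical surface parametrized by inclination angle $\psi$). The channel with contact angle $\gamma$ is the arc $\psi\in[0,\gamma]$ reflected in $r\mapsto-r$, resting on the line $u=u(\gamma)$; $2R$ is its maximal width (where it is vertical). Its volume per unit length is $\mathcal V(\gamma)=2\big(r(\gamma)u(\gamma)-\frac{\sin\gamma}\kappa\big)$. *)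

(* Defs.v *)
From Stdlib Require Import Reals.
From Coquelicot Require Import Coquelicot.
Open Scope R_scope.

Definition is_profile (kappa u0 : R) (r u : R -> R) : Prop :=
  r 0 = 0 /\ u 0 = u0 /\
  (forall psi, 0 <= psi <= PI ->
     is_derive r psi (cos psi / (kappa * u psi)) /\
     is_derive u psi (sin psi / (kappa * u psi))).

Definition channel_volume (kappa : R) (r u : R -> R) (gamma : R) : R :=
  2 * (r gamma * u gamma - sin gamma / kappa).

(* Main.v *)
Require Import Defs.
From Stdlib Require Import Reals Lra Ranalysis5.
From Coquelicot Require Import Coquelicot.
Open Scope R_scope.

Lemma cont_of_derive f x l : is_derive f x l -> continuity_pt f x.
Proof. intros H. apply continuity_pt_filterlim. apply (ex_derive_continuous (V:=R_NormedModule)). eexists; eauto. Qed.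

Lemma incr_le f df a b : a <= b -> (forall x, a<=x<=b -> is_derive f x (df x)) ->
  (forall x, a<=x<=b -> 0 <= df x) -> f a <= f b.
Proof.
 intros Hab Hd Hp. destruct (Req_dec a b) as [->|Hne]; [lra|].
 destruct (MVT_gen f a b df) as [c [Hc Heq]].
 - intros x Hx. apply Hd. rewrite Rmin_left, Rmax_right in Hx by lra. lra.
 - intros x Hx. rewrite Rmin_left, Rmax_right in Hx by lra. eapply cont_of_derive, Hd; lra.
 - rewrite Rmin_left, Rmax_right in Hc by lra. specialize (Hp c Hc). nra.
Qed.

Lemma incr_lt f df a b : a < b -> (forall x, a<=x<=b -> is_derive f x (df x)) ->
  (forall x, a<=x<=b -> 0 < df x) -> f a < f b.
Proof.
 intros Hab Hd Hp.
 destruct (MVT_gen f a b df) as [c [Hc Heq]].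
 - intros x Hx. apply Hd. rewrite Rmin_left, Rmax_right in Hx by lra. lra.
 - intros x Hx. rewrite Rmin_left, Rmax_right in Hx by lra. eapply cont_of_derive, Hd; lra.
 - rewrite Rmin_left, Rmax_right in Hc by lra. specialize (Hp c Hc). nra.
Qed.

Lemma incr_lt_l f df a m b : a < m -> m <= b -> (forall x, a<=x<=b -> is_derive f x (df x)) ->
  (forall x, a<=x<=b -> 0 <= df x) -> (forall x, a<=x<=m -> 0 < df x) -> f a < f b.
Proof.
 intros H1 H2 Hd Hp Hq.
 apply Rlt_le_trans with (f m).
 - apply incr_lt with df; auto.
   + intros; apply Hd; lra.
 - apply incr_le with df; [lra| |].
   + intros; apply Hd; lra.
   + intros; apply Hp; lra.
Qed.

Ltac dside := repeat split; try (eexists; eassumption); try assumption.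

Ltac rwd H := match type of H with is_derive ?f ?x ?l => rewrite (is_derive_unique (fun y : R => f y) x l H) end.

Lemma u_props k u0 r u : 0 < k -> 0 < u0 -> is_profile k u0 r u ->
  forall p, 0 <= p <= PI -> 0 < u p /\ u p * u p = u0 * u0 + 2 * (1 - cos p) / k.
Proof.
 intros Hk Hu0 [Hr0 [Hu0' Hd]].
 assert (Hsq : forall p, 0 <= p <= PI -> u0 * u0 <= u p * u p).
 { intros p Hp. rewrite <- Hu0'.
   apply incr_le with (f := fun x => u x * u x) (df := fun x => 2 * u x * (sin x / (k * u x))); try lra.
   - intros x Hx. destruct (Hd x ltac:(lra)) as [Ha Hb].
     auto_derive; dside. rwd Hb. ring.
   - intros x Hx. destruct (Req_dec (u x) 0) as [E|E].
     + rewrite E; lra.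
     + replace (2 * u x * (sin x / (k * u x))) with (2 * sin x / k) by (field; lra).
       pose proof (sin_ge_0 x ltac:(lra) ltac:(lra)).
       apply Rmult_le_pos; [lra|]. apply Rlt_le, Rinv_0_lt_compat; lra. }
 assert (Hpos : forall p, 0 <= p <= PI -> 0 < u p).
 { intros p Hp. destruct (Rlt_or_le 0 (u p)) as [H|H]; auto. exfalso.
   pose proof (Hsq p Hp).
   assert (Hn : u p < 0) by (destruct (Req_dec (u p) 0) as [E|E]; [rewrite E in *; nra | lra]).
   assert (Hp0 : 0 < p) by (destruct (Req_dec p 0) as [E|E]; [subst; lra | lra]).
   destruct (IVT_interv (fun x => - u x) 0 p) as [z [Hz1 Hz2]]; try lra.
   - intros a Ha. apply continuity_pt_opp. destruct (Hd a ltac:(lra)) as [_ Hb].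
     eapply cont_of_derive; eauto.
   - pose proof (Hsq z ltac:(lra)). nra. }
 intros p Hp. split; [auto|].
 set (g := fun x => u x * u x - 2 * (1 - cos x) / k).
 assert (E1 : g 0 <= g p).
 { apply incr_le with (f := g) (df := fun _ => 0); try (intros; lra).
   intros x Hx. destruct (Hd x ltac:(lra)) as [Ha Hb]. pose proof (Hpos x ltac:(lra)).
   unfold g; auto_derive; dside. rwd Hb. field; split; lra. }
 assert (E2 : - g 0 <= - g p).
 { apply incr_le with (f := fun x => - g x) (df := fun _ => 0); try (intros; lra).
   intros x Hx. destruct (Hd x ltac:(lra)) as [Ha Hb]. pose proof (Hpos x ltac:(lra)).
   unfold g; auto_derive; dside. rwd Hb. field; split; lra. }
 unfold g in *. rewrite cos_0, Hu0' in *. lra.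
Qed.

Lemma u_incr k u0 r u : 0 < k -> 0 < u0 -> is_profile k u0 r u ->
  forall x y, 0 <= x -> x < y -> y <= PI -> u x < u y.
Proof.
 intros Hk Hu0 HP x y H1 H2 H3.
 destruct (u_props k u0 r u Hk Hu0 HP x ltac:(lra)) as [Px Ex].
 destruct (u_props k u0 r u Hk Hu0 HP y ltac:(lra)) as [Py Ey].
 pose proof (cos_decreasing_1 x y ltac:(lra) ltac:(lra) ltac:(lra) ltac:(lra) H2).
 assert (u x * u x < u y * u y).
 { rewrite Ex, Ey. unfold Rdiv. apply Rplus_lt_compat_l.
   apply Rmult_lt_compat_r; [apply Rinv_0_lt_compat; lra | lra]. }
 nra.
Qed.

Lemma r_gt k u0 r u : 0 < k -> 0 < u0 -> is_profile k u0 r u ->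
  forall g, 0 < g <= PI / 2 -> sin g / (k * u g) < r g.
Proof.
 intros Hk Hu0 HP g Hg. pose proof PI_RGT_0.
 pose proof HP as [Hr0 [Hu0' Hd]].
 assert (Pg : 0 < u g) by (apply (u_props k u0 r u Hk Hu0 HP); lra).
 set (m := fun t => r t - sin t / (k * u g)).
 assert (m 0 < m g).
 { apply incr_lt_l with (df := fun t => cos t / (k * u t) - cos t / (k * u g)) (m := g / 2); try lra.
   - intros x Hx. destruct (Hd x ltac:(lra)) as [Ha Hb]. unfold m.
     auto_derive; dside. rwd Ha. field.
     pose proof (u_props k u0 r u Hk Hu0 HP x ltac:(lra)); lra.
   - intros x Hx. assert (Px : 0 < u x) by (apply (u_props k u0 r u Hk Hu0 HP); lra).
     assert (u x <= u g).
     { destruct (Req_dec x g) as [E|E]; [subst; lra|].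
       apply Rlt_le, (u_incr k u0 r u Hk Hu0 HP); lra. }
     pose proof (cos_ge_0 x ltac:(lra) ltac:(lra)).
     assert (/ (k * u g) <= / (k * u x)) by (apply Rinv_le_contravar; nra).
     assert (0 <= cos x * (/(k*u x) - /(k*u g))) by (apply Rmult_le_pos; lra).
     unfold Rdiv. lra.
   - intros x Hx. assert (Px : 0 < u x) by (apply (u_props k u0 r u Hk Hu0 HP); lra).
     assert (u x < u g) by (apply (u_incr k u0 r u Hk Hu0 HP); lra).
     pose proof (cos_gt_0 x ltac:(lra) ltac:(lra)).
     assert (/ (k * u g) < / (k * u x)) by (apply Rinv_lt_contravar; [repeat apply Rmult_lt_0_compat; lra | apply Rmult_lt_compat_l; lra]).
     assert (0 < cos x * (/(k*u x) - /(k*u g))) by (apply Rmult_lt_0_compat; lra).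
     unfold Rdiv. lra. }
 unfold m in H0. rewrite Hr0, sin_0 in H0. unfold Rdiv in *. lra.
Qed.

Lemma sin_xcos x : 0 < x <= PI / 2 -> 0 < sin x - x * cos x.
Proof.
 intros Hx. pose proof PI_RGT_0.
 assert (sin 0 - 0 * cos 0 <= sin (x/2) - (x/2) * cos (x/2)).
 { apply incr_le with (f := fun t => sin t - t * cos t) (df := fun t => t * sin t); try lra.
   - intros t Ht. auto_derive; auto. ring.
   - intros t Ht. pose proof (sin_ge_0 t ltac:(lra) ltac:(lra)). nra. }
 assert (sin (x/2) - (x/2) * cos (x/2) < sin x - x * cos x).
 { apply incr_lt with (f := fun t => sin t - t * cos t) (df := fun t => t * sin t); try lra.
   - intros t Ht. auto_derive; auto. ring.
   - intros t Ht. pose proof (sin_gt_0 t ltac:(lra) ltac:(lra)). nra. }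
 rewrite sin_0 in *; lra.
Qed.

Lemma x_sincos x : 0 <= x -> 0 <= x - sin x * cos x.
Proof.
 intros Hx. destruct (Req_dec x 0) as [->|E]; [rewrite sin_0; lra|].
 pose proof (sin_lt_x (2*x) ltac:(lra)). rewrite sin_2a in H. lra.
Qed.

Lemma phi_d s c t : s <> 0 -> s*s + c*c = 1 ->
 (1 + - (1 * c * c + s * (1 * - s))) * / (s * (s * 1)) + (t + - (s * c)) * (- (1 * c * ((1 + 1) * (s * 1))) * / (s * (s * 1) * (s * (s * 1))))
 = 2*(s - t*c)/s^3.
Proof. intros Hs H. transitivity ((s + s*(s*s+c*c) - 2*t*c)/s^3). field; auto. rewrite H. field; auto. Qed.

Lemma deriv_id k s c u r t : k <> 0 -> s <> 0 -> u <> 0 -> s*s+c*c = 1 ->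
 - (2 * (1 * (c / (k * u)) * u + r * (1 * (s / (k * u))) + - (1 * c * / k)) +
   - (1 * (c / (k * u)) * ((1 + 1) * (r * 1)) * ((t + - (s * c)) * / (s * (s * 1))) +
    r * (r * 1) * (2*(s - t*c)/s^3))) =
  - (2 * r * (s - t * c) / s ^ 2 * (/ (k * u) - r / s)).
Proof.
intros Hk Hs Hu H.
transitivity (-(2 * r * (s*(s*s+c*c) - t * c) / (s ^ 2 * k * u) - 2 * r^2 * (s - t*c) / s^3)).
field; auto. rewrite H. field; auto.
Qed.

Definition Vf k (r u : R -> R) t := 2 * (r t * u t - sin t / k).

Lemma part1 k u0 r u : 0 < k -> 0 < u0 -> is_profile k u0 r u ->
  forall g, 0 < g <= PI / 2 -> Vf k r u g < r g ^ 2 / sin g ^ 2 * (g - sin g * cos g).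
Proof.
 intros Hk Hu0 HP. pose proof PI_RGT_0 as HPI.
 pose proof HP as [Hr0 [Hu0' Hd]].
 set (HH := fun t => Vf k r u t - r t ^ 2 * ((t - sin t * cos t) / sin t ^ 2)).
 set (DH := fun t => 2 * r t * (sin t - t * cos t) / sin t ^ 2 * (/(k * u t) - r t / sin t)).
 assert (Hdec : forall a b, 0 < a -> a < b -> b <= PI / 2 -> HH b < HH a).
 { intros a b Ha Hab Hb.
   enough (- HH a < - HH b) by lra.
   apply incr_lt with (f := fun t => - HH t) (df := fun t => - DH t); [lra| |].
   - intros t Ht. destruct (Hd t ltac:(lra)) as [Hr Hu].
     pose proof (sin_gt_0 t ltac:(lra) ltac:(lra)).
     assert (Pt : 0 < u t) by (apply (u_props k u0 r u Hk Hu0 HP); lra).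
     unfold HH, DH, Vf. auto_derive.
     + dside. nra.
     + rwd Hr. rwd Hu.
       assert (Hsc : sin t * sin t + cos t * cos t = 1) by (pose proof (sin2_cos2 t); unfold Rsqr in *; lra).
       change RinvImpl.Rinv with Rinv.
       rewrite (phi_d (sin t) (cos t) t) by lra.
       apply (deriv_id k (sin t) (cos t) (u t) (r t) t); lra.
   - intros t Ht.
     pose proof (sin_gt_0 t ltac:(lra) ltac:(lra)).
     assert (Pt : 0 < u t) by (apply (u_props k u0 r u Hk Hu0 HP); lra).
     pose proof (r_gt k u0 r u Hk Hu0 HP t ltac:(lra)).
     pose proof (sin_xcos t ltac:(lra)).
     assert (0 < sin t / (k * u t)) by (apply Rdiv_lt_0_compat; nra).
     assert (/ (k * u t) - r t / sin t < 0).
     { apply Rmult_lt_reg_r with (sin t); auto.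
       replace ((/ (k * u t) - r t / sin t) * sin t) with (sin t / (k * u t) - r t) by (field; split; lra).
       lra. }
     assert (0 < 2 * r t * (sin t - t * cos t) / sin t ^ 2).
     { apply Rdiv_lt_0_compat; [|nra]. apply Rmult_lt_0_compat; lra. }
     unfold DH. nra. }
 assert (HV0 : Vf k r u 0 = 0) by (unfold Vf; rewrite Hr0, sin_0; field; lra).
 assert (Hc : continuity_pt (Vf k r u) 0).
 { destruct (Hd 0 ltac:(lra)) as [Hr Hu].
   apply continuity_pt_filterlim. apply (ex_derive_continuous (V:=R_NormedModule)).
   unfold Vf. auto_derive. dside. }
 assert (Hhalf : forall g, 0 < g <= PI / 2 -> HH g <= 0).
 { intros g Hg. destruct (Rle_or_lt (HH g) 0) as [L|L]; auto. exfalso.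
   destruct (Hc (HH g) L) as [alp [Halp Hf]].
   set (e := Rmin (alp/2) (g/2)).
   assert (He1 : 0 < e) by (unfold e; apply Rmin_glb_lt; lra).
   assert (He2 : e <= alp/2) by (unfold e; apply Rmin_l).
   assert (He3 : e <= g/2) by (unfold e; apply Rmin_r).
   specialize (Hf e). simpl in Hf. unfold R_dist in Hf. rewrite HV0 in Hf.
   assert (Hfe : Rabs (Vf k r u e - 0) < HH g).
   { apply Hf. split; [split; [exact I|lra]|]. rewrite Rminus_0_r, Rabs_pos_eq; lra. }
   rewrite Rminus_0_r in Hfe. pose proof (Rle_abs (Vf k r u e)).
   pose proof (Hdec e g He1 ltac:(lra) ltac:(lra)).
   assert (HH e <= Vf k r u e).
   { unfold HH. pose proof (sin_gt_0 e ltac:(lra) ltac:(lra)).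
     pose proof (x_sincos e ltac:(lra)).
     assert (0 <= r e ^ 2 * ((e - sin e * cos e) / sin e ^ 2)).
     { apply Rmult_le_pos; [nra|]. apply Rmult_le_pos; [lra|]. apply Rlt_le, Rinv_0_lt_compat; nra. }
     lra. }
   lra. }
 intros g Hg.
 pose proof (Hdec (g/2) g ltac:(lra) ltac:(lra) ltac:(lra)).
 pose proof (Hhalf (g/2) ltac:(lra)).
 unfold HH in *. unfold Rdiv in *. lra.
Qed.

Lemma part2 k u0 r u : 0 < k -> 0 < u0 -> is_profile k u0 r u ->
  forall g, PI / 2 <= g <= PI -> Vf k r u g < r (PI/2) ^ 2 * (g - sin g * cos g).
Proof.
 intros Hk Hu0 HP. pose proof PI_RGT_0 as HPI.
 pose proof HP as [Hr0 [Hu0' Hd]].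
 set (y0 := u (PI/2)). set (Rr := r (PI/2)).
 assert (Py0 : 0 < y0) by (apply (u_props k u0 r u Hk Hu0 HP); lra).
 assert (HR : / (k * y0) < Rr).
 { pose proof (r_gt k u0 r u Hk Hu0 HP (PI/2) ltac:(lra)). rewrite sin_PI2 in H.
   unfold Rdiv in H. rewrite Rmult_1_l in H. exact H. }
 assert (HRp : 0 < Rr) by (pose proof (Rinv_0_lt_compat (k*y0) ltac:(nra)); lra).
 assert (Pu : forall p, PI/2 <= p <= PI -> 0 < u p)
   by (intros; apply (u_props k u0 r u Hk Hu0 HP); lra).
 assert (Hrho : forall p, PI/2 <= p <= PI -> / (k * u p) <= / (k * y0)).
 { intros p Hp. destruct (Req_dec p (PI/2)) as [E|E]; [subst; unfold y0; lra|].
   pose proof (u_incr k u0 r u Hk Hu0 HP (PI/2) p ltac:(lra) ltac:(lra) ltac:(lra)).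
   apply Rinv_le_contravar; [nra|]. fold y0 in H. apply Rmult_le_compat_l; lra. }
 assert (Hrge : forall p, PI/2 <= p <= PI -> Rr * sin p <= r p).
 { intros p Hp.
   assert (r (PI/2) - Rr * sin (PI/2) <= r p - Rr * sin p); [|rewrite sin_PI2 in H; fold Rr in H; lra].
   apply incr_le with (f := fun t => r t - Rr * sin t)
     (df := fun t => cos t * (/ (k * u t) - Rr)); try lra.
   - intros t Ht. destruct (Hd t ltac:(lra)) as [Ha Hb]. pose proof (Pu t ltac:(lra)).
     auto_derive; dside. rwd Ha. change RinvImpl.Rinv with Rinv. field. lra.
   - intros t Ht. pose proof (cos_le_0 t ltac:(lra) ltac:(lra)). pose proof (Hrho t ltac:(lra)).
     nra. }
 assert (Hule : forall p, PI/2 <= p <= PI -> u p - y0 <= - Rr * cos p).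
 { intros p Hp.
   assert (- (u (PI/2) - y0 + Rr * cos (PI/2)) <= - (u p - y0 + Rr * cos p)); [|rewrite cos_PI2 in H; fold y0 in H; lra].
   apply incr_le with (f := fun t => - (u t - y0 + Rr * cos t))
     (df := fun t => sin t * (Rr - / (k * u t))); try lra.
   - intros t Ht. destruct (Hd t ltac:(lra)) as [Ha Hb]. pose proof (Pu t ltac:(lra)).
     auto_derive; dside. rwd Hb. change RinvImpl.Rinv with Rinv. field. lra.
   - intros t Ht. pose proof (sin_ge_0 t ltac:(lra) ltac:(lra)). pose proof (Hrho t ltac:(lra)).
     nra. }
 assert (HD : forall p, PI/2 <= p <= PI -> r p ^ 2 + (u p - y0) ^ 2 <= Rr ^ 2).
 { intros p Hp.
   assert (- (r (PI/2) ^ 2 + (u (PI/2) - y0) ^ 2) <= - (r p ^ 2 + (u p - y0) ^ 2)); [|fold y0 Rr in H; lra].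
   apply incr_le with (f := fun t => - (r t ^ 2 + (u t - y0) ^ 2))
     (df := fun t => - (2 * / (k * u t)) * (r t * cos t + (u t - y0) * sin t)); try lra.
   - intros t Ht. destruct (Hd t ltac:(lra)) as [Ha Hb]. pose proof (Pu t ltac:(lra)).
     auto_derive; dside. rwd Ha. rwd Hb. change RinvImpl.Rinv with Rinv. field. lra.
   - intros t Ht. pose proof (sin_ge_0 t ltac:(lra) ltac:(lra)). pose proof (cos_le_0 t ltac:(lra) ltac:(lra)).
     pose proof (Hrge t ltac:(lra)). pose proof (Hule t ltac:(lra)).
     assert (r t * cos t <= Rr * sin t * cos t) by nra.
     assert ((u t - y0) * sin t <= - Rr * cos t * sin t) by nra.
     assert (0 < / (k * u t)) by (apply Rinv_0_lt_compat; pose proof (Pu t ltac:(lra)); nra).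
     nra. }
 set (f := fun t => sqrt (Rr ^ 2 - t ^ 2)).
 assert (Hfc : forall t, continuous f t).
 { intros t. unfold f. apply (continuous_comp (fun t => Rr ^ 2 - t ^ 2) sqrt).
   - apply (ex_derive_continuous (V:=R_NormedModule)). auto_derive. auto.
   - apply continuous_sqrt. }
 set (C := fun h => 2 * RInt f 0 h).
 assert (HCd : forall h, is_derive C h (2 * f h)).
 { intros h.
   assert (is_derive (fun h => RInt f 0 h) h (f h)).
   { apply is_derive_RInt with 0.
     - apply filter_forall. intros b. apply (RInt_correct (V:=R_CompleteNormedModule)).
       apply ex_RInt_continuous. intros; apply Hfc.
     - apply Hfc. }
   exact (is_derive_scal (fun h => RInt f 0 h) h 2 (f h) H). }
 assert (HC0 : C 0 = 0). { unfold C. rewrite RInt_point. unfold zero; simpl. ring. }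
 intros g Hg.
 assert (HW : Vf k r u g - C (u g - y0) <= Vf k r u (PI/2) - C (u (PI/2) - y0)).
 { enough (- (Vf k r u (PI/2) - C (u (PI/2) - y0)) <= - (Vf k r u g - C (u g - y0))) by lra.
   apply incr_le with (f := fun t => - (Vf k r u t - C (u t - y0)))
     (df := fun t => 2 * (sin t / (k * u t)) * (f (u t - y0) - r t)); try lra.
   - intros t Ht. destruct (Hd t ltac:(lra)) as [Ha Hb]. pose proof (Pu t ltac:(lra)).
     pose proof (HCd (u t - y0)) as HC'.
     unfold Vf. auto_derive.
     + repeat split; try (eexists; eassumption).
     + rwd Ha. rwd Hb. rewrite (is_derive_unique (fun y : R => C y) (u t + - y0) _ HC'). change RinvImpl.Rinv with Rinv. field. lra.
   - intros t Ht. pose proof (sin_ge_0 t ltac:(lra) ltac:(lra)). pose proof (Pu t ltac:(lra)).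
     assert (0 <= r t) by (pose proof (Hrge t ltac:(lra)); pose proof (sin_ge_0 t ltac:(lra) ltac:(lra)); nra).
     assert (r t <= f (u t - y0)).
     { unfold f. rewrite <- (sqrt_pow2 (r t)) at 1 by lra. apply sqrt_le_1; [nra| |].
       - pose proof (HD t ltac:(lra)). nra.
       - pose proof (HD t ltac:(lra)). lra. }
     assert (0 <= sin t / (k * u t)) by (apply Rmult_le_pos; [lra|]; apply Rlt_le, Rinv_0_lt_compat; nra).
     nra. }
 assert (HV2 : Vf k r u (PI/2) < Rr ^ 2 * (PI / 2)).
 { pose proof (part1 k u0 r u Hk Hu0 HP (PI/2) ltac:(lra)) as H1.
   rewrite sin_PI2, cos_PI2 in H1. fold Rr in H1. replace (Rr ^ 2 * (PI / 2)) with (Rr ^ 2 / 1 ^ 2 * (PI / 2 - 1 * 0)) by field. exact H1. }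
 assert (HCm : C (u g - y0) <= C (- (Rr * cos g))).
 { apply incr_le with (df := fun h => 2 * f h).
   - pose proof (Hule g Hg). lra.
   - intros; apply HCd.
   - intros; unfold f; pose proof (sqrt_pos (Rr ^ 2 - x ^ 2)); lra. }
 assert (HF : forall p, PI/2 <= p <= PI ->
           C (- (Rr * cos p)) - Rr ^ 2 * (p - sin p * cos p) = C (- (Rr * cos (PI/2))) - Rr ^ 2 * (PI/2 - sin (PI/2) * cos (PI/2))).
 { intros p Hp.
   assert (Hd0 : forall t, PI/2 <= t <= p -> is_derive (fun t => C (- (Rr * cos t)) - Rr ^ 2 * (t - sin t * cos t)) t 0).
   { intros t Ht. pose proof (HCd (- (Rr * cos t))) as HC'.
     pose proof (sin_ge_0 t ltac:(lra) ltac:(lra)).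
     pose proof (sin2_cos2 t) as Hsc. unfold Rsqr in Hsc.
     assert (E : f (- (Rr * cos t)) = Rr * sin t).
     { unfold f. replace (Rr ^ 2 - (- (Rr * cos t)) ^ 2) with ((Rr * sin t) ^ 2).
       - apply sqrt_pow2. nra.
       - assert (Rr ^ 2 * (sin t * sin t + cos t * cos t) = Rr ^ 2) by (rewrite Hsc; ring). nra. }
     rewrite E in HC'.
     auto_derive.
     + repeat split; try (eexists; eassumption).
     + rwd HC'. assert (Rr ^ 2 * (sin t * sin t + cos t * cos t) = Rr ^ 2) by (rewrite Hsc; ring). nra. }
   apply Rle_antisym.
   - enough (- (C (- (Rr * cos (PI/2))) - Rr ^ 2 * (PI/2 - sin (PI/2) * cos (PI/2))) <= - (C (- (Rr * cos p)) - Rr ^ 2 * (p - sin p * cos p))) by lra.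
     apply incr_le with (f := fun t => - (C (- (Rr * cos t)) - Rr ^ 2 * (t - sin t * cos t))) (df := fun _ => 0); try lra.
     + intros t Ht. pose proof (is_derive_opp _ _ _ (Hd0 t Ht)) as H'.
       change (opp (0:R)) with (-0) in H'. rewrite Ropp_0 in H'. exact H'.
     + intros; lra.
   - apply incr_le with (f := fun t => (C (- (Rr * cos t)) - Rr ^ 2 * (t - sin t * cos t))) (df := fun _ => 0).
     + lra.
     + intros t Ht; apply Hd0; lra.
     + intros; lra. }
 pose proof (HF g Hg) as HFg. rewrite sin_PI2, cos_PI2, Rmult_0_r, Ropp_0, HC0 in HFg.
 replace (u (PI/2) - y0) with 0 in HW by (unfold y0; ring). rewrite HC0 in HW.
 fold Rr. lra.
Qed.
Theorem mainTheorem13 (kappa u0 : R) (r u : R -> R) :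
  0 < kappa -> 0 < u0 -> is_profile kappa u0 r u ->
  (forall gamma, 0 < gamma <= PI / 2 ->
     channel_volume kappa r u gamma
       < (r gamma) ^ 2 / (sin gamma) ^ 2 * (gamma - sin gamma * cos gamma)) /\
  (forall gamma, PI / 2 <= gamma <= PI ->
     channel_volume kappa r u gamma
       < (r (PI / 2)) ^ 2 * (gamma - sin gamma * cos gamma)).
Proof.
  intros Hk Hu0 HP. split.
  - intros g Hg. exact (part1 kappa u0 r u Hk Hu0 HP g Hg).
  - intros g Hg. exact (part2 kappa u0 r u Hk Hu0 HP g Hg).
Qed.
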